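(* There exists a sequence $c=\{c_k\}_{k\in\mathbb Z}$ of real numbers such that, letting $c^-$ be the two-sided sequence with $c^-_k=c_k$ for $k\le0$ and $c^-_k=0$ for $k>0$, and $c^+$ the two-sided sequence with $c^+_k=c_k$ for $k\ge1$ and $c^+_k=0$ for $k\le0$, we have $c^-\notin\overline{\mathrm{GM}}$, $c^+\in\overline{\mathrm{GM}}$, and $c\in\overline{\mathrm{GM}}$.
   Context: For a two-sided sequence $c$: $|\Delta c_k|=|c_k-c_{k+1}|$ for $k>0$, $|\Delta c_k|=|c_k-c_{k-1}|$ for $k<0$, $|\Delta c_0|=|c_0-c_1|+|c_0-c_{-1}|$; for $k\ge0$, $\widehat c_{2^k}=\sup_{2^k\le|m|<2^{k+1}}\frac1{|m|+1}|\sum_{j=0}^mc_j|$, where for $m<0$, $\sum_{j=0}^mc_j$ means $\sum_{j=m}^0c_j$; $[\cdot]$ is the floor function. The sequence $c$ belongs to $\overline{\mathrm{GM}}$ if there is $C>0$ such that for every $n\ge0$, $\sum_{[2^{n-1}]\le|m|<2^n}|\Delta c_m|\le C\sup_{k\in\mathbb N_0}\min(1,2^{k-n})\widehat c_{2^k}$. *)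

(* Defs.v *)
From HB Require Import structures.
From mathcomp Require Import all_boot all_order all_algebra.
From mathcomp Require Import all_classical all_reals all_analysis.
From mathcomp Require Import Rstruct.
Set Implicit Arguments. Unset Strict Implicit. Unset Printing Implicit Defensive.
Import Order.TTheory GRing.Theory Num.Theory.
Local Open Scope ring_scope.

Notation Rr := Rdefinitions.R.

Definition dabs (c : int -> Rr) (k : int) : Rr :=
  if (0 < k)%R then `|c k - c (k + 1)|
  else if (k < 0)%R then `|c k - c (k - 1)|
  else `|c 0 - c 1| + `|c 0 - c (-1)|.

Definition psum (c : int -> Rr) (m : int) : Rr :=
  if (0 <= m)%R then \sum_(0 <= j < `|m|%N.+1) c (j%:Z)
  else \sum_(0 <= j < `|m|%N.+1) c (- (j%:Z)).

(* hat c_{2^k} = sup_{2^k <= |m| < 2^(k+1)} |sum_{j=0}^m c_j| / (|m|+1);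
   m ranges over the integers i - 2^(k+1), 0 <= i <= 2^(k+2), filtered;
   the index set is finite and nonempty and the terms are >= 0,
   so the sup is the max (with 0 as neutral element). *)
Definition hatc (c : int -> Rr) (k : nat) : Rr :=
  \big[Num.max/0]_(i < (2 * 2 ^ k.+1).+1 |
      ((2 ^ k <= `|i%:Z - (2 ^ k.+1)%:Z|%N) && (`|i%:Z - (2 ^ k.+1)%:Z|%N < 2 ^ k.+1))%N)
    (`|psum c (i%:Z - (2 ^ k.+1)%:Z)| / ((`|i%:Z - (2 ^ k.+1)%:Z|%N)%:R + 1)).

(* sum_{[2^(n-1)] <= |m| < 2^n} |Delta c_m|, m = i - 2^n with 0 <= i <= 2^(n+1);
   [2^(n-1)] = 2^n %/ 2 (floor; equals 0 for n = 0). *)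
Definition dyadic_var (c : int -> Rr) (n : nat) : Rr :=
  \sum_(i < (2 * 2 ^ n).+1 |
      ((2 ^ n %/ 2 <= `|i%:Z - (2 ^ n)%:Z|%N) && (`|i%:Z - (2 ^ n)%:Z|%N < 2 ^ n))%N)
    dabs c (i%:Z - (2 ^ n)%:Z).

Definition gm_sup (c : int -> Rr) (n : nat) : \bar Rr :=
  ereal_sup [set ((Num.min 1 ((2%:R : Rr) ^ (k%:Z - n%:Z))) * hatc c k)%:E
            | k in [set: nat]].

Definition GMbar (c : int -> Rr) : Prop :=
  exists C : Rr, 0 < C /\
    forall n : nat, ((dyadic_var c n)%:E <= C%:E * gm_sup c n)%E.

Definition cminus (c : int -> Rr) : int -> Rr := fun k => if (k <= 0)%R then c k else 0.
Definition cplus (c : int -> Rr) : int -> Rr := fun k => if (1 <= k)%R then c k else 0.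

(* Main.v *)
Require Import Defs.
From mathcomp Require Import all_boot all_order all_algebra.
From mathcomp Require Import all_classical all_reals all_analysis.
From mathcomp Require Import Rstruct.
From mathcomp Require Import ring lra zify.
Import Order.TTheory GRing.Theory Num.Theory.
Local Open Scope ring_scope.

Definition cc (k : int) : Rr := if (k <= 0)%R then (-1) ^+ `|k|%N else k%:~R.

Lemma sum_alt N : \sum_(0 <= j < N.+1) ((-1 : Rr) ^+ j) = (~~ odd N)%:R.
Proof.
elim: N => [|N IH]; first by rewrite big_nat1 expr0.
rewrite big_nat_recr //= IH -signr_odd /=.
by case: (odd N) => /=; rewrite ?expr1 ?expr0; lra.
Qed.

Lemma psum_minus m : `|psum (cminus cc) m| <= 1.
Proof.
rewrite /psum; case: ifP => hm.
  rewrite big_nat_recl // big1 ?addr0.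
    by rewrite /cminus /cc /= expr0 normr1.
  by move=> j _; rewrite /cminus.
rewrite (eq_bigr (fun j => (-1 : Rr) ^+ j)); last first.
  move=> j _; rewrite /cminus /cc.
  have h : - (j%:Z) <= 0 by rewrite oppr_le0.
  by rewrite h abszN absz_nat.
by rewrite sum_alt; case: (odd _) => /=; rewrite ?normr1 ?normr0.
Qed.

Lemma two_pow_gt0 k : 0 < (2%:R : Rr) ^+ k.
Proof. by apply: exprn_gt0; rewrite ltr0n. Qed.

Lemma hatc_minus k : hatc (cminus cc) k <= ((2%:R : Rr) ^+ k)^-1.
Proof.
rewrite /hatc; apply: bigmax_le; first by rewrite invr_ge0 ltW // two_pow_gt0.
move=> i /andP [h1 h2].
set M := `|_|%N in h1 h2 *.
have hM : 0 < M%:R + 1 :> Rr by rewrite ltr_wpDl // ler0n.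
rewrite ler_pdivrMr //.
apply: le_trans (psum_minus _) _.
have h2k := two_pow_gt0 k.
apply: le_trans (_ : ((2%:R : Rr) ^+ k)^-1 * 2%:R ^+ k <= _).
  by rewrite mulVf // lt0r_neq0.
rewrite ler_wpM2l ?invr_ge0 ?ltW //.
rewrite -natrX natr1.
by rewrite ltr_nat; lia.
Qed.

Lemma gm_minus n : (gm_sup (cminus cc) n <= (((2%:R : Rr) ^+ n)^-1)%:E)%E.
Proof.
apply: ge_ereal_sup => _ [k _ <-]; rewrite lee_fin.
have hz : 0 < (2%:R : Rr) ^ (k%:Z - n%:Z).
  by apply: exprz_gt0; rewrite ltr0n.
apply: le_trans (_ : Num.min 1 ((2%:R : Rr) ^ (k%:Z - n%:Z)) * ((2%:R : Rr) ^+ k)^-1 <= _).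
  by rewrite ler_wpM2l ?hatc_minus // le_min ler01 ltW.
apply: le_trans (_ : ((2%:R : Rr) ^ (k%:Z - n%:Z)) * ((2%:R : Rr) ^+ k)^-1 <= _).
  by rewrite ler_wpM2r ?ge_min ?lexx ?orbT // invr_ge0 ltW // two_pow_gt0.
have e : (2%:R : Rr) ^ (k%:Z - n%:Z) * 2%:R ^+ n = 2%:R ^+ k.
  have -> : (2%:R : Rr) ^+ n = 2%:R ^ (n%:Z) by [].
  by rewrite -expfzDr ?pnatr_eq0 // subrK.
have hn := two_pow_gt0 n; have hk := two_pow_gt0 k.
rewrite -e invfM mulrA mulfV ?mul1r //.
Qed.

Lemma dabs_ge0 f m : 0 <= dabs f m.
Proof. by rewrite /dabs; case: ifP => _; [|case: ifP => _]; rewrite ?addr_ge0. Qed.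

Lemma signS2 a : `|(-1 : Rr) ^+ a.+1 - (-1) ^+ a.+2| = 2.
Proof.
rewrite -[(-1) ^+ a.+1]signr_odd -[(-1) ^+ a.+2]signr_odd /=.
case: (odd a) => /=; rewrite ?expr0 ?expr1.
  by rewrite opprK ger0_norm; lra.
by rewrite ler0_norm; lra.
Qed.

Lemma dabs_minus a : dabs (cminus cc) (Negz a) = 2.
Proof.
rewrite /dabs /=.
have -> : Negz a - 1 = Negz a.+1 by rewrite !NegzE; lia.
rewrite /cminus /cc /=; exact: signS2.
Qed.

Lemma dv_minus n : (0 < n)%N -> 2 <= dyadic_var (cminus cc) n.
Proof.
move=> hn.
have h2 : (2 <= 2 ^ n)%N by rewrite -{1}(expn1 2) leq_exp2l.
have hi : (1 < (2 * 2 ^ n).+1)%N by lia.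
pose i1 := Ordinal hi.
have hP : (2 ^ n %/ 2 <= `|i1%:Z - (2 ^ n)%:Z|%N)%N && (`|i1%:Z - (2 ^ n)%:Z|%N < 2 ^ n)%N.
  rewrite /=; move: h2; set x := (2 ^ n)%N; move=> h2; lia.
rewrite /dyadic_var (bigD1 i1) //=.
have -> : 1%:Z - (2 ^ n)%:Z = Negz (2 ^ n - 2)%N.
  rewrite NegzE; move: h2; set x := (2 ^ n)%N; move=> h2; lia.
rewrite dabs_minus ler_wpDr // sumr_ge0 // => j _; exact: dabs_ge0.
Qed.

Lemma not_gm_minus : ~ GMbar (cminus cc).
Proof.
move=> [C [hC hb]].
pose n := (Num.Def.archi_bound C).+1.
have hn : (0 < n)%N by [].
have h1 := hb n.
have h2 : ((2 : Rr)%:E <= C%:E * (((2%:R : Rr) ^+ n)^-1)%:E)%E.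
  apply: le_trans (_ : (dyadic_var (cminus cc) n)%:E <= _)%E.
    by rewrite lee_fin dv_minus.
  apply: le_trans h1 _.
  by apply: lee_wpmul2l; [rewrite lee_fin ltW | exact: gm_minus].
move: h2; rewrite -EFinM lee_fin.
have hp := two_pow_gt0 n.
rewrite ler_pdivlMr // => h2.
have hb0 := archi_boundP (ltW hC).
have : (n%:R : Rr) <= 2%:R ^+ n.
  by rewrite -natrX ler_nat ltnW // ltn_expl.
rewrite /n in hp h2 * => h3.
have : (Num.Def.archi_bound C)%:R < ((Num.Def.archi_bound C).+1)%:R :> Rr.
  by rewrite ltr_nat.
move: hb0 h3 h2 hp; move: (2%:R ^+ _) => y.
move: (_.+1%:R) => z; move: (_%:R) => x.
move=> *; lra.
Qed.

Lemma psum_lb (f : int -> Rr) : 0 <= f 0 -> (forall j : nat, f (j.+1)%:Z = (j.+1)%:R) ->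
  forall N : nat, ((N * N.+1)%N%:R : Rr) <= 2 * \sum_(0 <= j < N.+1) f j%:Z.
Proof.
move=> H0 H; elim=> [|N IH]; first by rewrite big_nat1 mul0n mulr_ge0.
rewrite big_nat_recr //= H.
rewrite (_ : (N.+1 * N.+2 = N * N.+1 + 2 * N.+1)%N); last by lia.
rewrite natrD natrM; lra.
Qed.

Lemma hatc_lb (f : int -> Rr) : 0 <= f 0 -> (forall j : nat, f (j.+1)%:Z = (j.+1)%:R) ->
  forall n : nat, (2%:R : Rr) ^+ n / 2 <= hatc f n.
Proof.
move=> H0 H n.
have hx : (0 < 2 ^ n)%N by rewrite expn_gt0.
have hi : (2 ^ n.+1 + 2 ^ n < (2 * 2 ^ n.+1).+1)%N by rewrite !expnS; lia.
pose i := Ordinal hi.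
have ei : i%:Z - (2 ^ n.+1)%:Z = (2 ^ n)%:Z by rewrite /= PoszD addrAC subrr add0r.
have hP : (2 ^ n <= `|i%:Z - (2 ^ n.+1)%:Z|%N)%N && (`|i%:Z - (2 ^ n.+1)%:Z|%N < 2 ^ n.+1)%N.
  by rewrite ei /= expnS; apply/andP; split; lia.
rewrite /hatc.
apply: le_trans (le_bigmax_cond 0 (fun i : 'I_(2 * 2 ^ n.+1).+1 => `|psum f (i%:Z - (2^n.+1)%:Z)| / ((`|i%:Z - (2^n.+1)%:Z|%N)%:R + 1)) hP).
rewrite ei /psum le0z_nat absz_nat.
set S := \sum_(_ <= _ < _) _.
have hS := @psum_lb f H0 H (2 ^ n).
have hM : 0 < (2 ^ n)%:R + 1 :> Rr by rewrite ltr_wpDl // ler0n.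
rewrite ler_pdivlMr // -natrX.
rewrite natrM -natr1 in hS.
rewrite -/S in hS.
have hx0 : 0 <= (2 ^ n)%:R :> Rr by rewrite ler0n.
have hxx : 0 <= (2 ^ n)%:R * ((2 ^ n)%:R + 1) :> Rr by rewrite mulr_ge0 // addr_ge0.
have hS0 : 0 <= S by lra.
rewrite ger0_norm //; nra.
Qed.

Lemma dv_ub (f : int -> Rr) (B : Rr) : 0 <= B -> (forall m, dabs f m <= B) ->
  forall n, dyadic_var f n <= B * (3 * (2%:R : Rr) ^+ n).
Proof.
move=> hB HB n; rewrite /dyadic_var big_mkcond /=.
apply: le_trans (_ : \sum_(i < (2 * 2 ^ n).+1) B <= _).
  by apply: ler_sum => i _; case: ifP => _.
rewrite sumr_const card_ord -[B *+ _]mulr_natr.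
apply: (ler_wpM2l hB).
have hx : (0 < 2 ^ n)%N by rewrite expn_gt0.
have h : ((2 * 2 ^ n).+1%:R : Rr) <= (3 * 2 ^ n)%N%:R by rewrite ler_nat; lia.
by apply: le_trans h _; rewrite natrM natrX.
Qed.

Lemma gm_of (f : int -> Rr) (B : Rr) : 0 < B -> (forall m, dabs f m <= B) ->
  (forall n : nat, (2%:R : Rr) ^+ n / 2 <= hatc f n) -> GMbar f.
Proof.
move=> hB HB Hh; exists (6 * B); split; first by lra.
move=> n.
apply: (@le_trans _ _ (((6 * B)%R)%:E * (hatc f n)%:E)%E).
  rewrite -EFinM lee_fin; apply: (le_trans (@dv_ub f B (ltW hB) HB n)).
  have := Hh n; have := two_pow_gt0 n; nra.
apply: lee_wpmul2l; first by rewrite lee_fin; lra.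
apply: ereal_sup_ubound; exists n => //.
by rewrite subrr expr0z minxx mul1r.
Qed.


Lemma cplus_pos a : cplus cc (Posz a.+1) = a.+1%:R.
Proof. by rewrite /cplus /cc lez_nat. Qed.

Lemma cplus_np k : k <= 0 -> cplus cc k = 0.
Proof.
move=> hk; rewrite /cplus; case: ifP => // h.
have : (1 <= 0 :> int) by apply: le_trans h hk.
by [].
Qed.

Lemma cc_pos a : cc (Posz a.+1) = a.+1%:R.
Proof. by rewrite /cc. Qed.

Lemma cc_np k : k <= 0 -> cc k = (-1) ^+ `|k|%N.
Proof. by move=> hk; rewrite /cc hk. Qed.

Lemma step1 a : `|(a.+1%:R : Rr) - a.+2%:R| = 1.
Proof.
have -> : (a.+2%:R : Rr) = a.+1%:R + 1 by rewrite natr1.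
move: (a.+1%:R : Rr) => x.
by rewrite (_ : x - (x + 1) = -1) ?normrN ?normr1 //; lra.
Qed.

Lemma dabs_plus m : dabs (cplus cc) m <= 1.
Proof.
rewrite /dabs; case: m => [[|a]|a].
- rewrite ltxx (@cplus_np 0 (lexx 0)) (@cplus_np (-1)) //.
  have -> : cplus cc 1 = 1%:R by exact: (cplus_pos 0).
  by rewrite sub0r subrr normr0 addr0 normrN normr1.
- rewrite ltz_nat ltn0Sn.
  have -> : (Posz a.+1 + 1) = Posz a.+2 by rewrite -PoszD addn1.
  by rewrite !cplus_pos step1.
- rewrite (_ : (0 < Negz a) = false) // (_ : (Negz a < 0) = true) //.
  by rewrite !cplus_np // subrr normr0.
Qed.

Lemma dabs_c m : dabs cc m <= 2.
Proof.
rewrite /dabs; case: m => [[|a]|a].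
- rewrite ltxx (@cc_np 0 (lexx 0)) (@cc_np (-1)) //.
  have -> : cc 1 = 1%:R by exact: (cc_pos 0).
  rewrite expr0 subrr normr0 add0r /= expr1 opprK.
  by rewrite ger0_norm; lra.
- rewrite ltz_nat ltn0Sn.
  have -> : (Posz a.+1 + 1) = Posz a.+2 by rewrite -PoszD addn1.
  by rewrite !cc_pos step1; lra.
- rewrite (_ : (0 < Negz a) = false) // (_ : (Negz a < 0) = true) //.
  have -> : Negz a - 1 = Negz a.+1 by rewrite !NegzE; lia.
  by rewrite !cc_np // signS2.
Qed.

Theorem mainTheorem16 :
  exists c : int -> Rdefinitions.R,
    ~ GMbar (cminus c) /\ GMbar (cplus c) /\ GMbar c.
Proof.
exists cc; split; first exact: not_gm_minus.
split.
  apply: (@gm_of _ 1 ltr01 dabs_plus).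
  apply: hatc_lb; first by rewrite cplus_np.
  exact: cplus_pos.
apply: (@gm_of _ 2 _ dabs_c); first by lra.
apply: hatc_lb; last exact: cc_pos.
by rewrite cc_np // expr0 ler01.
Qed.
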